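(* Let $\psi(x)=-2\pi\sin(2\pi x)$, $b\ge2$ an integer, $\gamma\in(1/b,1)$. Let $x^*\in[0,1/2]$ and $0\le k<l<b$ with $(k,l)\in E(1,x^* )$. Then for any $\kappa\in(0,1)$, either $$\Big|\cos\tfrac{2\pi(x^*+k)}{b}-\cos\tfrac{2\pi(x^*+l)}{b}\Big|\le\frac{2\gamma\sqrt{1-\kappa^2}}{b}+\frac{2\gamma^2}{b(b-\gamma)},$$ or $$\Big|\sin\tfrac{2\pi(x^*+k)}{b}-\sin\tfrac{2\pi(x^*+l)}{b}\Big|\le2\kappa\gamma+\frac{2\gamma^2}{1-\gamma}.$$
   Context: $\mathcal{A}=\{0,\dots,b-1\}$. $S(x,\mathbf{i})=\sum_{n\ge1}\gamma^{n-1}\psi\big(\frac{x+i_1+i_2b+\cdots+i_nb^{n-1}}{b^n}\big)$ for $\mathbf{i}\in\mathcal{A}^{\mathbb{Z}^+}$, $S'=\partial_xS$. Sequences $\mathbf{i},\mathbf{j}$ are $(\varepsilon,\delta)$-tangent at $x_0$ if $|S(x_0,\mathbf{i})-S(x_0,\mathbf{j})|\le\varepsilon$ and $|S'(x_0,\mathbf{i})-S'(x_0,\mathbf{j})|\le\delta$. $E(1,x_0;\varepsilon,\delta)$ is the set of pairs $(k,l)\in\mathcal{A}\times\mathcal{A}$ such that for some $\mathbf{u},\mathbf{v}\in\mathcal{A}^{\mathbb{Z}^+}$ the sequences $k\mathbf{u},l\mathbf{v}$ are $(\varepsilon,\delta)$-tangent at $x_0$; $E(1,x_0)=\bigcap_{\varepsilon,\delta>0}E(1,x_0;\varepsilon,\delta)$.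 *)

(* Defs.v *)
From Stdlib Require Import Reals Lra ClassicalEpsilon.
Open Scope R_scope.

Definition psi (x : R) : R := - 2 * PI * sin (2 * PI * x).

(* A sequence i in A^{Z+} is a function nat -> nat; i_1 = i 0, i_2 = i 1, ...
   It is admissible when all digits are < b. *)
Definition digit_seq (b : nat) (i : nat -> nat) : Prop := forall n, (i n < b)%nat.

Definition scons (k : nat) (u : nat -> nat) : nat -> nat :=
  fun n => match n with O => k | S m => u m end.

(* n-th term (n starting at 0, i.e. paper's index n+1):
   gamma^n * psi((x + i_1 + i_2 b + ... + i_{n+1} b^n) / b^(n+1)) *)
Definition S_term (b : nat) (gamma x : R) (i : nat -> nat) (n : nat) : R :=
  gamma ^ n * psi ((x + sum_f_R0 (fun j => INR (i j) * INR b ^ j) n) / INR b ^ (S n)).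

(* S(x,i): the sum of the series (chosen by Hilbert's epsilon; the series
   converges absolutely for 0 < gamma < 1). *)
Definition Ssum (b : nat) (gamma x : R) (i : nat -> nat) : R :=
  epsilon (inhabits 0) (fun l => infinite_sum (S_term b gamma x i) l).

Definition tangent (b : nat) (gamma x0 eps delta : R) (i j : nat -> nat) : Prop :=
  Rabs (Ssum b gamma x0 i - Ssum b gamma x0 j) <= eps /\
  exists d1 d2 : R,
    derivable_pt_lim (fun x => Ssum b gamma x i) x0 d1 /\
    derivable_pt_lim (fun x => Ssum b gamma x j) x0 d2 /\
    Rabs (d1 - d2) <= delta.

Definition E1_eps (b : nat) (gamma x0 eps delta : R) (k l : nat) : Prop :=
  (k < b)%nat /\ (l < b)%nat /\
  exists u v : nat -> nat, digit_seq b u /\ digit_seq b v /\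
    tangent b gamma x0 eps delta (scons k u) (scons l v).

Definition E_one (b : nat) (gamma x0 : R) (k l : nat) : Prop :=
  forall eps delta : R, 0 < eps -> 0 < delta -> E1_eps b gamma x0 eps delta k l.

(* Main.v *)
Require Import Defs.
From Stdlib Require Import Reals Lra Lia ClassicalEpsilon.
From Coquelicot Require Import Coquelicot.
Open Scope R_scope.

Lemma sin_lip a c : Rabs (sin a - sin c) <= Rabs (a - c).
Proof.
  destruct (MVT_abs sin cos c a) as [z [H _]].
  { intros; apply derivable_pt_lim_sin. }
  rewrite H.
  assert (Rabs (cos z) <= 1) by (apply Rabs_le; apply COS_bound).
  rewrite <- (Rmult_1_l (Rabs (a - c))) at 2.
  apply Rmult_le_compat_r; [apply Rabs_pos|exact H0].
Qed.

Lemma term_bound b g x i n : 0 <= g -> Rabs (S_term b g x i n) <= 2*PI*g^n.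
Proof.
  intros Hg. unfold S_term, psi.
  set (y := sin _).
  assert (Rabs y <= 1) by (apply Rabs_le; apply SIN_bound).
  assert (0 <= g^n) by (apply pow_le; lra).
  assert (0 < PI) by apply PI_RGT_0.
  replace (g ^ n * (- 2 * PI * y)) with (-(2*PI*g^n) * y) by ring.
  assert (0 <= 2*PI*g^n) by (apply Rmult_le_pos; lra).
  rewrite Rabs_mult, Rabs_Ropp, (Rabs_pos_eq (2*PI*g^n)) by lra.
  rewrite <- (Rmult_1_r (2*PI*g^n)) at 2. apply Rmult_le_compat_l; lra.
Qed.

Lemma term_lip b g x y i n : 0 <= g -> 0 < INR b ->
  Rabs (S_term b g x i n - S_term b g y i n) <= (4*PI^2 * g^n / INR b ^ S n) * Rabs (x - y).
Proof.
  intros Hg Hb. unfold S_term, psi.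
  set (s := sum_f_R0 _ n). set (B := INR b ^ S n).
  assert (0 < B) by (apply pow_lt; lra).
  assert (0 <= g^n) by (apply pow_le; lra).
  assert (0 < PI) by apply PI_RGT_0.
  replace (g ^ n * (- 2 * PI * sin (2 * PI * ((x + s) / B))) -
     g ^ n * (- 2 * PI * sin (2 * PI * ((y + s) / B)))) with
    (-(2*PI*g^n) * (sin (2 * PI * ((x + s) / B)) - sin (2 * PI * ((y + s) / B)))) by ring.
  assert (0 <= 2*PI*g^n) by (apply Rmult_le_pos; lra).
  rewrite Rabs_mult, Rabs_Ropp, (Rabs_pos_eq (2*PI*g^n)) by lra.
  eapply Rle_trans.
  { apply Rmult_le_compat_l; [lra| apply sin_lip]. }
  replace (2 * PI * ((x + s) / B) - 2 * PI * ((y + s) / B)) with ((2*PI/B) * (x - y)) by (field; lra).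
  rewrite Rabs_mult, (Rabs_pos_eq (2*PI/B)).
  2:{ apply Rlt_le, Rdiv_lt_0_compat; lra. }
  right. field. lra.
Qed.

Lemma tail_bound (g a : nat -> R) G A N : (forall n, Rabs (g n) <= a n) ->
  infinite_sum g G -> infinite_sum a A -> Rabs (G - sum_f_R0 g N) <= A - sum_f_R0 a N.
Proof.
  intros Hga Hg Ha.
  assert (P : forall p, Rabs (sum_f_R0 g (N+p) - sum_f_R0 g N) <= sum_f_R0 a (N+p) - sum_f_R0 a N).
  { induction p.
    - rewrite Nat.add_0_r, Rminus_diag, Rabs_R0. lra.
    - rewrite Nat.add_succ_r. cbn [sum_f_R0].
      replace (sum_f_R0 g (N + p) + g (S (N + p)) - sum_f_R0 g N) with
        ((sum_f_R0 g (N + p) - sum_f_R0 g N) + g (S (N + p))) by ring.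
      eapply Rle_trans; [apply Rabs_triang|]. specialize (Hga (S (N+p))). lra. }
  apply Rnot_lt_le; intro H.
  set (e := (Rabs (G - sum_f_R0 g N) - (A - sum_f_R0 a N))/2).
  assert (He : 0 < e) by (unfold e; lra).
  destruct (Hg e He) as [n1 H1]. destruct (Ha e He) as [n2 H2].
  specialize (H1 (N + (n1 + n2))%nat ltac:(lia)). specialize (H2 (N + (n1 + n2))%nat ltac:(lia)).
  specialize (P (n1+n2)%nat). unfold R_dist in *.
  set (SM := sum_f_R0 g (N + (n1 + n2))) in *. set (TM := sum_f_R0 a (N + (n1 + n2))) in *.
  assert (Rabs (G - sum_f_R0 g N) <= Rabs (G - SM) + Rabs (SM - sum_f_R0 g N)).
  { replace (G - sum_f_R0 g N) with ((G - SM) + (SM - sum_f_R0 g N)) by ring. apply Rabs_triang. }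
  rewrite Rabs_minus_sym in H1.
  apply Rabs_def2 in H2. unfold e in *. lra.
Qed.

Lemma geo1 g : 0 <= g < 1 -> infinite_sum (fun n => 2*PI*g^n) (2*PI/(1-g)).
Proof.
  intros Hg. apply is_series_Reals.
  assert (H := is_series_geom g ltac:(rewrite Rabs_pos_eq; lra)).
  apply (is_series_scal (2*PI)) in H.
  exact H.
Qed.

Lemma geo2 g B : 0 <= g -> g < B -> infinite_sum (fun n => 4*PI^2*g^n/B^S n) (4*PI^2/(B-g)).
Proof.
  intros Hg HB. apply is_series_Reals.
  assert (H := is_series_geom (g/B) ltac:(rewrite Rabs_pos_eq; [apply Rmult_lt_reg_r with B; [lra|]; field_simplify; lra | apply Rmult_le_pos; [lra| apply Rlt_le, Rinv_0_lt_compat; lra]])).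
  apply (is_series_scal (4*PI^2/B)) in H.
  replace (4*PI^2/(B-g)) with (scal (4*PI^2/B) (/(1-g/B))).
  2:{ unfold scal; simpl; unfold mult; simpl. field. lra. }
  eapply is_series_ext; [|exact H].
  intros n. unfold scal; simpl; unfold mult; simpl. unfold Rdiv. rewrite Rpow_mult_distr, pow_inv. field. split; [|lra]. apply pow_nonzero; lra.
Qed.

Lemma isum_scal f l c : infinite_sum f l -> infinite_sum (fun n => f n * c) (l * c).
Proof.
  intros H. apply is_series_Reals. apply is_series_Reals in H.
  apply (is_series_scal c) in H. replace (l*c) with (scal c l) by (unfold scal; simpl; unfold mult; simpl; ring).
  eapply is_series_ext; [|exact H].
  intros n. simpl. unfold scal; simpl; unfold mult; simpl. ring.
Qed.
Lemma isum_minus f g l1 l2 : infinite_sum f l1 -> infinite_sum g l2 -> infinite_sum (fun n => f n - g n) (l1 - l2).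
Proof.
  intros H1 H2. apply is_series_Reals. apply is_series_Reals in H1. apply is_series_Reals in H2.
  exact (is_series_minus _ _ _ _ H1 H2).
Qed.

Lemma Ssum_spec b g x i : 0 <= g < 1 -> infinite_sum (S_term b g x i) (Ssum b g x i).
Proof.
  intros Hg. unfold Ssum. apply epsilon_spec.
  assert (E : ex_series (S_term b g x i)).
  { apply (@ex_series_le R_AbsRing R_CompleteNormedModule _ (fun n => 2*PI*g^n)).
    - intros n. apply term_bound. lra.
    - eexists. apply is_series_Reals. apply geo1. lra. }
  destruct E as [l Hl]. exists l. apply is_series_Reals. exact Hl.
Qed.

Lemma S_term0 b g x i : 0 < INR b -> S_term b g x i 0%nat = -2*PI*sin(2*PI*(x + INR (i O))/INR b).
Proof. intros Hb. unfold S_term, psi. cbn [sum_f_R0 pow]. replace (2 * PI * ((x + INR (i O) * 1) / (INR b * 1))) with (2*PI*(x + INR (i O))/INR b) by (field; lra). ring. Qed.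

Lemma S_term1 b g x i : 0 < INR b ->
  S_term b g x i 1%nat = -2*PI*g*sin(2*PI*(x + INR (i O) + INR (i 1%nat)*INR b)/(INR b * INR b)).
Proof. intros Hb. unfold S_term, psi. cbn [sum_f_R0 pow].
  replace (2 * PI * ((x + (INR (i O) * 1 + INR (i 1%nat) * (INR b * 1))) / (INR b * (INR b * 1)))) with
   (2*PI*(x + INR (i O) + INR (i 1%nat)*INR b)/(INR b * INR b)) by (field; lra). ring. Qed.

Lemma value_bound b g x i : 0 <= g < 1 ->
  Rabs (Ssum b g x i - (S_term b g x i 0%nat + S_term b g x i 1%nat)) <= 2*PI*g^2/(1-g).
Proof.
  intros Hg.
  assert (H := tail_bound (S_term b g x i) (fun n => 2*PI*g^n) _ _ 1%nat (fun n => term_bound b g x i n ltac:(lra))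
     (Ssum_spec b g x i Hg) (geo1 g Hg)).
  cbn [sum_f_R0] in H. eapply Rle_trans; [exact H|]. right. field. lra.
Qed.

Lemma deriv_bound (f : R -> R) x0 d L : derivable_pt_lim f x0 d ->
  (forall x, Rabs (f x - f x0) <= L * Rabs (x - x0)) -> Rabs d <= L.
Proof.
  intros Hd HL. apply Rnot_lt_le; intro H.
  destruct (Hd (Rabs d - L) ltac:(lra)) as [del Hdel].
  assert (Hp := cond_pos del).
  specialize (Hdel (del/2) ltac:(lra) ltac:(rewrite Rabs_pos_eq; lra)).
  specialize (HL (x0 + del/2)).
  replace (x0 + del/2 - x0) with (del/2) in HL by ring.
  rewrite (Rabs_pos_eq (del/2)) in HL by lra.
  assert (Rabs ((f (x0 + del / 2) - f x0) / (del / 2)) <= L).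
  { set (h := del/2) in *. assert (0 < h) by (unfold h; lra). set (A := f (x0 + h) - f x0) in *.
    replace (A / h) with (A * / h) by reflexivity.
    rewrite Rabs_mult, Rabs_inv, (Rabs_pos_eq h) by lra.
    apply Rmult_le_reg_r with h; [lra|]. field_simplify; [|lra]. lra. }
  assert (Rabs d <= Rabs ((f (x0 + del / 2) - f x0) / (del / 2)) + Rabs ((f (x0 + del / 2) - f x0) / (del / 2) - d)).
  { rewrite <- (Rabs_Ropp (_ - d)). eapply Rle_trans; [|apply Rabs_triang]. right. f_equal. ring. }
  lra.
Qed.

Lemma Ssum_deriv b g x0 i d : 0 <= g < 1 -> 1 <= INR b ->
  derivable_pt_lim (fun x => Ssum b g x i) x0 d ->
  Rabs (d - (-4*PI^2*cos(2*PI*(x0+INR(i O))/INR b)/INR b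
             - 4*PI^2*g*cos(2*PI*(x0 + INR (i O) + INR (i 1%nat)*INR b)/(INR b*INR b))/(INR b*INR b)))
   <= 4*PI^2*g^2/(INR b^2*(INR b - g)).
Proof.
  intros Hg Hb Hd.
  assert (D0 : is_derive (fun x => S_term b g x i 0%nat) x0 (-4*PI^2*cos(2*PI*(x0+INR(i O))/INR b)/INR b)).
  { apply (is_derive_ext (fun x => -2*PI*sin(2*PI*(x + INR (i O))/INR b))).
    { intros t; rewrite S_term0 by lra; reflexivity. }
    auto_derive; [exact I|]. unfold Rdiv. field. lra. }
  assert (D1 : is_derive (fun x => S_term b g x i 1%nat) x0
     (- 4*PI^2*g*cos(2*PI*(x0 + INR (i O) + INR (i 1%nat)*INR b)/(INR b*INR b))/(INR b*INR b))).
  { apply (is_derive_ext (fun x => -2*PI*g*sin(2*PI*(x + INR (i O) + INR (i 1%nat)*INR b)/(INR b * INR b)))).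
    { intros t; rewrite S_term1 by lra; reflexivity. }
    auto_derive; [exact I|]. unfold Rdiv. field. lra. }
  apply is_derive_Reals in Hd.
  assert (Dh := is_derive_minus _ _ _ _ _ (is_derive_minus _ _ _ _ _ Hd D0) D1).
  set (h := fun x => Ssum b g x i - S_term b g x i 0%nat - S_term b g x i 1%nat).
  set (D0v := -4 * PI ^ 2 * cos (2 * PI * (x0 + INR (i 0%nat)) / INR b) / INR b) in *.
  set (D1v := -4 * PI ^ 2 * g * cos (2 * PI * (x0 + INR (i 0%nat) + INR (i 1%nat) * INR b) / (INR b * INR b)) / (INR b * INR b)) in *.
  assert (Dh' : derivable_pt_lim h x0 (d - D0v - D1v)).
  { apply is_derive_Reals in Dh. exact Dh. }
  replace (d - (D0v - 4 * PI ^ 2 * g * cos (2 * PI * (x0 + INR (i 0%nat) + INR (i 1%nat) * INR b) / (INR b * INR b)) / (INR b * INR b)))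
    with (d - D0v - D1v) by (unfold D1v; field; lra).
  apply (deriv_bound h x0 _ _ Dh').
  intros x.
  assert (HB : 0 <= g < INR b) by lra.
  assert (T := tail_bound (fun n => S_term b g x i n - S_term b g x0 i n)
     (fun n => 4*PI^2*g^n/INR b^S n * Rabs (x - x0)) _ _ 1%nat
     (fun n => term_lip b g x x0 i n ltac:(lra) ltac:(lra))
     (isum_minus _ _ _ _ (Ssum_spec b g x i Hg) (Ssum_spec b g x0 i Hg))
     (isum_scal _ _ (Rabs (x - x0)) (geo2 g (INR b) ltac:(lra) ltac:(lra)))).
  cbn [sum_f_R0 pow] in T. unfold h.
  cbv beta.
  replace (Ssum b g x i - S_term b g x i 0%nat - S_term b g x i 1%nat -
     (Ssum b g x0 i - S_term b g x0 i 0%nat - S_term b g x0 i 1%nat)) with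
    (Ssum b g x i - Ssum b g x0 i -
       (S_term b g x i 0%nat - S_term b g x0 i 0%nat +
        (S_term b g x i 1%nat - S_term b g x0 i 1%nat))) by ring.
  eapply Rle_trans; [exact T|].
  right. field. lra.
Qed.

Lemma Rabs_eq_le x y T : x = y -> Rabs y <= T -> Rabs x <= T.
Proof. intros ->; auto. Qed.

Lemma abs_split x y : Rabs x <= y -> -y <= x <= y.
Proof. intros H. split.
  - assert (-x <= Rabs x) by (rewrite <- Rabs_Ropp; apply Rle_abs). lra.
  - assert (x <= Rabs x) by apply Rle_abs. lra. Qed.

Lemma comb (s1 s2 xk xl yu yv P Q T eps K : R) : 0 < P -> 0 <= Q ->
  Rabs (s1 - (-P*xk - P*Q*yu)) <= T -> Rabs (s2 - (-P*xl - P*Q*yv)) <= T ->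
  Rabs (s1 - s2) <= P*eps -> Rabs (yu - yv) <= K ->
  Rabs (xk - xl) <= eps + Q*K + 2*T/P.
Proof.
  intros HP HQ H1 H2 H3 H4.
  assert (HW : Rabs (P*Q*(yu - yv)) <= P*Q*K).
  { rewrite Rabs_mult, (Rabs_pos_eq (P*Q)) by (apply Rmult_le_pos; lra).
    apply Rmult_le_compat_l; [apply Rmult_le_pos; lra|exact H4]. }
  set (a := s1 - (-P*xk - P*Q*yu)) in *. set (bb := s2 - (-P*xl - P*Q*yv)) in *.
  set (c := s1 - s2) in *. set (w := P*Q*(yu - yv)) in *.
  assert (E : P*(xk - xl) = a - bb - c - w) by (unfold a, bb, c, w; ring).
  apply abs_split in H1. apply abs_split in H2. apply abs_split in H3. apply abs_split in HW.
  assert (Rabs (P*(xk - xl)) <= P*eps + P*Q*K + 2*T).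
  { apply Rabs_le. rewrite E. lra. }
  rewrite Rabs_mult, (Rabs_pos_eq P) in H by lra.
  apply Rmult_le_reg_l with P; [lra|].
  replace (P * (eps + Q * K + 2 * T / P)) with (P*eps + P*Q*K + 2*T) by (field; lra). lra.
Qed.

Lemma circle p q kap : 0 < kap < 1 ->
  Rabs (sin p - sin q) <= 2*kap \/ Rabs (cos p - cos q) <= 2*sqrt(1-kap^2).
Proof.
  intros Hk. destruct (Rle_dec (Rabs (sin p - sin q)) (2*kap)) as [H|H]; [left; exact H|right].
  apply Rnot_le_lt in H.
  assert (Hp := sin2_cos2 p). assert (Hq := sin2_cos2 q). unfold Rsqr in Hp, Hq.
  set (s := sqrt (1 - kap^2)).
  assert (Hs0 : 0 <= s) by apply sqrt_pos.
  assert (Hs2 : s * s = 1 - kap^2) by (apply sqrt_sqrt; nra).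
  assert (A1 : Rabs (sin p - sin q) * Rabs (sin p - sin q) = (sin p - sin q)*(sin p - sin q)).
  { rewrite <- Rabs_mult. apply Rabs_pos_eq. exact (Rle_0_sqr _). }
  assert (A2 : Rabs (cos p - cos q) * Rabs (cos p - cos q) = (cos p - cos q)*(cos p - cos q)).
  { rewrite <- Rabs_mult. apply Rabs_pos_eq. exact (Rle_0_sqr _). }
  assert (0 <= (cos p + cos q)*(cos p + cos q)) by exact (Rle_0_sqr _).
  assert (0 <= (sin p + sin q)*(sin p + sin q)) by exact (Rle_0_sqr _).
  assert (Sum : (cos p - cos q)*(cos p - cos q) + (sin p - sin q)*(sin p - sin q) <= 4) by nra.
  assert (Rabs (sin p - sin q) * Rabs (sin p - sin q) > 4*kap*kap) by nra.
  assert (Hc0 := Rabs_pos (cos p - cos q)).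
  apply Rnot_lt_le; intro Hc. nra.
Qed.

Lemma limit_or (P1 C1 P2 C2 : R) :
  (forall e, 0 < e -> P1 <= C1 + e \/ P2 <= C2 + e) -> P1 <= C1 \/ P2 <= C2.
Proof.
  intros H. destruct (Rle_dec P1 C1) as [h|h]; [left; exact h|right].
  apply Rnot_lt_le; intro h2. apply Rnot_le_lt in h.
  destruct (H (Rmin (P1 - C1) (P2 - C2) / 2)) as [h3|h3].
  - apply Rmin_case; lra.
  - assert (Rmin (P1 - C1) (P2 - C2) <= P1 - C1) by apply Rmin_l.
    assert (0 < Rmin (P1 - C1) (P2 - C2)) by (apply Rmin_case; lra). lra.
  - assert (Rmin (P1 - C1) (P2 - C2) <= P2 - C2) by apply Rmin_r.
    assert (0 < Rmin (P1 - C1) (P2 - C2)) by (apply Rmin_case; lra). lra.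
Qed.

Theorem lemma4p1 (b : nat) (gamma xs kappa : R) (k l : nat) :
  (2 <= b)%nat ->
  / INR b < gamma -> gamma < 1 ->
  0 <= xs -> xs <= / 2 ->
  (k < l)%nat -> (l < b)%nat ->
  E_one b gamma xs k l ->
  0 < kappa -> kappa < 1 ->
  Rabs (cos (2 * PI * (xs + INR k) / INR b) - cos (2 * PI * (xs + INR l) / INR b))
    <= 2 * gamma * sqrt (1 - kappa ^ 2) / INR b
       + 2 * gamma ^ 2 / (INR b * (INR b - gamma))
  \/
  Rabs (sin (2 * PI * (xs + INR k) / INR b) - sin (2 * PI * (xs + INR l) / INR b))
    <= 2 * kappa * gamma + 2 * gamma ^ 2 / (1 - gamma).
Proof.
  intros Hb Hg1 Hg2 _ _ _ _ HE Hk1 Hk2.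
  assert (HB : 2 <= INR b) by (apply le_INR in Hb; simpl in Hb; lra).
  assert (Hg0 : 0 < gamma) by (assert (0 < / INR b) by (apply Rinv_0_lt_compat; lra); lra).
  assert (Hg : 0 <= gamma < 1) by lra.
  assert (HPI := PI_RGT_0).
  apply limit_or. intros e He.
  destruct (HE (2*PI*e) (4*PI^2/INR b*e)) as [_ [_ [u [v [_ [_ [Hv [d1 [d2 [Hd1 [Hd2 Hdd]]]]]]]]]]].
  { nra. }
  { apply Rmult_lt_0_compat; [|lra]. apply Rdiv_lt_0_compat; [nra|lra]. }
  assert (V1 := value_bound b gamma xs (scons k u) Hg).
  assert (V2 := value_bound b gamma xs (scons l v) Hg).
  assert (D1 := Ssum_deriv b gamma xs (scons k u) d1 Hg ltac:(lra) Hd1).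
  assert (D2 := Ssum_deriv b gamma xs (scons l v) d2 Hg ltac:(lra) Hd2).
  rewrite S_term0, S_term1 in V1, V2 by lra.
  change (scons k u O) with k in *. change (scons l v O) with l in *.
  change (scons k u 1%nat) with (u O) in *. change (scons l v 1%nat) with (v O) in *.
  destruct (circle (2 * PI * (xs + INR k + INR (u O) * INR b) / (INR b * INR b))
                   (2 * PI * (xs + INR l + INR (v O) * INR b) / (INR b * INR b)) kappa ltac:(lra)) as [C|C].
  - right.
    assert (R := comb (Ssum b gamma xs (scons k u)) (Ssum b gamma xs (scons l v))
       (sin (2 * PI * (xs + INR k) / INR b)) (sin (2 * PI * (xs + INR l) / INR b))
       (sin (2 * PI * (xs + INR k + INR (u O) * INR b) / (INR b * INR b)))
       (sin (2 * PI * (xs + INR l + INR (v O) * INR b) / (INR b * INR b)))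
       (2*PI) gamma _ e _ ltac:(lra) ltac:(lra)
       ltac:(eapply Rabs_eq_le; [|exact V1]; ring)
       ltac:(eapply Rabs_eq_le; [|exact V2]; ring) Hv C).
    eapply Rle_trans; [exact R|]. right. field. lra.
  - left.
    assert (R := comb d1 d2
       (cos (2 * PI * (xs + INR k) / INR b)) (cos (2 * PI * (xs + INR l) / INR b))
       (cos (2 * PI * (xs + INR k + INR (u O) * INR b) / (INR b * INR b)))
       (cos (2 * PI * (xs + INR l + INR (v O) * INR b) / (INR b * INR b)))
       (4*PI^2/INR b) (gamma / INR b) _ e _ ltac:(apply Rdiv_lt_0_compat; [nra|lra])
       ltac:(apply Rdiv_le_0_compat; lra)
       ltac:(eapply Rabs_eq_le; [|exact D1]; field; lra)
       ltac:(eapply Rabs_eq_le; [|exact D2]; field; lra) Hdd C).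
    eapply Rle_trans; [exact R|]. right. field. split; lra.
Qed.
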